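(* Let $X$ be a Banach space, $\mathbb F\subseteq\mathbb D$ finite, and $(h,i)\in\mathbb F$ an $\mathbb F$-admissible index. If $f_{\mathbb F}=\sum_{(k,j)\in\mathbb F}x_k^{(j)}\chi_k^{(j)}$ with $x_k^{(j)}\in X$, then there exist elements $y_k^{(j)}\in X$, $(k,j)\in\Phi_h^{(i)}(\mathbb F)$, such that $$f_{\mathbb F}\circ\phi_h^{(i)}=\sum_{(k,j)\in\Phi_h^{(i)}(\mathbb F)}y_k^{(j)}\chi_k^{(j)}\quad\text{and}\quad\sum_{(k,j)\in\mathbb F}\|x_k^{(j)}\|^2=\sum_{(k,j)\in\Phi_h^{(i)}(\mathbb F)}\|y_k^{(j)}\|^2.$$
   Context: Dyadic intervals: $\Delta_k^{(j)}:=[\frac{j-1}{2^k},\frac{j}{2^k})$ for $k\ge0$. Haar functions: for $k\ge1$, integer $j$, $\chi_k^{(j)}(t)=+2^{(k-1)/2}$ on $\Delta_k^{(2j-1)}$, $-2^{(k-1)/2}$ on $\Delta_k^{(2j)}$, $0$ otherwise, $t\in[0,1)$. Dyadic tree $\mathbb D:=\{(k,j):k\ge1;\ j=1,\dots,2^{k-1}\}$. For $(h,i)\in\mathbb D$, $\phi_h^{(i)}:[0,1)\to[0,1)$ is $t\mapsto t+2^{-(h+1)}$ on $\Delta_{h+1}^{(4i-2)}$, $t\mapsto t-2^{-(h+1)}$ on $\Delta_{h+1}^{(4i-1)}$, identity otherwise. An index $(h,i)\in\mathbb F$ is $\mathbb F$-admissible if neither $(h+1,2i-1)$ nor $(h+1,2i)$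 belongs to $\mathbb F$. Fork: $\mathbb F_h^{(i)}:=\{(h,i),(h+1,2i-1),(h+1,2i)\}$. For $(k,j)\in\mathbb D$ define $j^\ast$: $j^\ast=j+2^{k-h-2}$ if $\Delta_{k-1}^{(j)}\subseteq\Delta_{h+1}^{(4i-2)}$; $j^\ast=j-2^{k-h-2}$ if $\Delta_{k-1}^{(j)}\subseteq\Delta_{h+1}^{(4i-1)}$; $j^\ast=j$ otherwise (so that $\chi_k^{(j)}\circ\phi_h^{(i)}=\chi_k^{(j^\ast)}$ for $(k,j)\notin\mathbb F_h^{(i)}$). Then $\Phi_h^{(i)}(\mathbb F):=\{(h+1,2i-1),(h+1,2i)\}\cup\{(k,j^\ast):(k,j)\in\mathbb F\setminus\mathbb F_h^{(i)}\}$. *)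

(* Defs.v *)
From mathcomp Require Import all_boot all_order all_algebra.
From mathcomp Require Import all_classical all_reals all_analysis.
Set Implicit Arguments. Unset Strict Implicit. Unset Printing Implicit Defensive.
Import Order.TTheory GRing.Theory Num.Theory.
Import numFieldNormedType.Exports.
Local Open Scope classical_set_scope.
Local Open Scope ring_scope.

Section Haar.
Variable R : realType.

Definition dyint (k j : nat) : set R :=
  [set t | (j%:R - 1) / 2 ^+ k <= t /\ t < j%:R / 2 ^+ k].

(* Haar function chi_k^{(j)} (used for k >= 1, j >= 1) *)
Definition haar (k j : nat) (t : R) : R :=
  if `[< dyint k (2 * j - 1)%N t >] then Num.sqrt (2 ^+ (k - 1)%N)
  else if `[< dyint k (2 * j)%N t >] then - Num.sqrt (2 ^+ (k - 1)%N)
  else 0.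

Definition phi (h i : nat) (t : R) : R :=
  if `[< dyint (h + 1)%N (4 * i - 2)%N t >] then t + (2 ^+ (h + 1)%N)^-1
  else if `[< dyint (h + 1)%N (4 * i - 1)%N t >] then t - (2 ^+ (h + 1)%N)^-1
  else t.

Definition jstar (h i k j : nat) : nat :=
  if `[< dyint (k - 1)%N j `<=` dyint (h + 1)%N (4 * i - 2)%N >] then (j + 2 ^ (k - h - 2))%N
  else if `[< dyint (k - 1)%N j `<=` dyint (h + 1)%N (4 * i - 1)%N >] then (j - 2 ^ (k - h - 2))%N
  else j.

End Haar.

Definition inD (p : nat * nat) : Prop :=
  (1 <= p.1)%N /\ (1 <= p.2)%N /\ (p.2 <= 2 ^ (p.1 - 1))%N.

Definition fork (h i : nat) : seq (nat * nat) :=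
  [:: (h, i); (h + 1, 2 * i - 1)%N; (h + 1, 2 * i)%N].

Definition admissible (F : seq (nat * nat)) (h i : nat) : Prop :=
  (h + 1, 2 * i - 1)%N \notin F /\ (h + 1, 2 * i)%N \notin F.

(* Phi_h^{(i)}(F), as a duplicate-free list representing the finite set *)
Definition Phi (R : realType) (h i : nat) (F : seq (nat * nat)) : seq (nat * nat) :=
  undup ([:: (h + 1, 2 * i - 1)%N; (h + 1, 2 * i)%N] ++
         [seq (p.1, @jstar R h i p.1 p.2) | p <- F & p \notin fork h i]).

(* Main.v *)
Require Import Defs.
From mathcomp Require Import all_boot all_order all_algebra.
From mathcomp Require Import all_classical all_reals all_analysis.
From mathcomp Require Import zify.
Set Implicit Arguments. Unset Strict Implicit. Unset Printing Implicit Defensive.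
Import Order.TTheory GRing.Theory Num.Theory.
Import numFieldNormedType.Exports.
Local Open Scope ring_scope.


Definition dz (e : nat) (m n : int) : bool :=
  ((m - 1) * (2 ^ e)%N%:Z <= n) && (n < m * (2 ^ e)%N%:Z).

Lemma asb (P : Prop) (b : bool) : (P <-> b) -> `[< P >] = b.
Proof.
move=> H; case: b H => H; first by apply/asboolP; apply/H.
by apply/asboolPn => /H.
Qed.

Section Real.
Variable R : realType.

Lemma pow2_gt0 (n : nat) : 0 < (2 : R) ^+ n.
Proof. by apply: exprn_gt0. Qed.

Lemma intr_pow (e : nat) : ((2 ^ e)%N%:Z)%:~R = (2 : R) ^+ e.
Proof. by rewrite -pmulrn natrX. Qed.

Lemma dyintZ (N k : nat) (m : nat) (t : R) : (k <= N)%N ->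
  dyint k m t <-> dz (N - k) m%:Z (Num.floor (t * 2 ^+ N)).
Proof.
move=> kN.
have EN : (2 : R) ^+ N = 2 ^+ k * 2 ^+ (N - k) by rewrite -exprD subnKC.
rewrite /dyint /dz /=.
have P := pow2_gt0 k; have Q := pow2_gt0 (N - k).
rewrite Num.Theory.floor_ge_int Num.Theory.floor_lt_int.
rewrite !rmorphM /= intr_pow rmorphB /= EN mulrA -pmulrn.
rewrite ler_pdivrMr // ltr_pdivlMr // -(ler_pM2r Q) -(ltr_pM2r Q).
split; first by case=> -> ->.
by case/andP=> -> ->.
Qed.

Definition hz (e : nat) (j n : int) : int :=
  if dz e (2 * j - 1) n then 1 else if dz e (2 * j) n then -1 else 0.

Definition phz (N h : nat) (i n : int) : int :=
  if dz (N - h - 1) (4 * i - 2) n then n + (2 ^ (N - h - 1))%N%:Z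
  else if dz (N - h - 1) (4 * i - 1) n then n - (2 ^ (N - h - 1))%N%:Z
  else n.

Lemma haarZ (N k j : nat) (t : R) : (k <= N)%N -> (1 <= j)%N ->
  haar k j t = Num.sqrt (2 ^+ (k - 1)) * (hz (N - k) j%:Z (Num.floor (t * 2 ^+ N)))%:~R.
Proof.
move=> kN j1; rewrite /haar /hz.
rewrite (asb (dyintZ _ _ kN)) (asb (dyintZ _ _ kN)).
have -> : ((2 * j - 1)%N%:Z) = 2 * j%:Z - 1 by lia.
have -> : ((2 * j)%N%:Z) = 2 * j%:Z by lia.
case: ifP => _; first by rewrite mulr1.
by case: ifP => _; rewrite ?mulrN1 ?mulr0.
Qed.

Lemma floor_add_int (x : R) (z : int) : Num.floor (x + z%:~R) = Num.floor x + z.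
Proof. by rewrite Num.Theory.floorDrz ?intr_int // Num.Theory.intrKfloor. Qed.

Lemma phiZ (N h i : nat) (t : R) : (h + 1 <= N)%N -> (1 <= i)%N ->
  Num.floor (phi h i t * 2 ^+ N) = phz N h i%:Z (Num.floor (t * 2 ^+ N)).
Proof.
move=> hN i1; rewrite /phi /phz.
rewrite (asb (dyintZ _ _ hN)) (asb (dyintZ _ _ hN)) subnDA.
have -> : ((4 * i - 2)%N%:Z) = 4 * i%:Z - 2 by lia.
have -> : ((4 * i - 1)%N%:Z) = 4 * i%:Z - 1 by lia.
have EN : (2 : R) ^+ N = 2 ^+ (h + 1) * 2 ^+ (N - h - 1) by rewrite -subnDA -exprD subnKC.
have E2 : (2 ^+ (h + 1))^-1 * 2 ^+ N = ((2 ^ (N - h - 1))%N%:Z)%:~R :> R.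
  by rewrite intr_pow EN mulKf // gt_eqF // pow2_gt0.
case: ifP => _; first by rewrite mulrDl E2 floor_add_int.
case: ifP => _ //.
by rewrite mulrBl E2 -rmorphN /= floor_add_int.
Qed.


Lemma subZ (N k1 k2 m1 m2 : nat) : (k1 <= N)%N -> (k2 <= N)%N ->
  (dyint k1 m1 `<=` (dyint k2 m2 : set R))%classic <->
  (forall n : int, dz (N - k1) m1%:Z n -> dz (N - k2) m2%:Z n).
Proof.
move=> k1N k2N; split.
- move=> S n H.
  have E : Num.floor ((n%:~R / 2 ^+ N : R) * 2 ^+ N) = n.
    by rewrite divfK ?gt_eqF ?pow2_gt0 // Num.Theory.intrKfloor.
  rewrite -E; apply/(dyintZ _ _ k2N); apply: S; apply/(dyintZ _ _ k1N).
  by rewrite E.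
- move=> H t /(dyintZ _ _ k1N) /H /(dyintZ _ _ k2N) //.
Qed.

Lemma jstar_low (h i k j : nat) : (1 <= k)%N -> (k <= h + 1)%N -> @jstar R h i k j = j.
Proof.
move=> k1 kh.
have NS : forall m : nat, ~ (forall n : int, dz (h + 1 - (k - 1)) j%:Z n -> dz (h + 1 - (h + 1)) m%:Z n).
  move=> m H.
  have [e E] : exists e, (h + 1 - (k - 1) = e.+1)%N by exists (h + 1 - k)%N; lia.
  rewrite E subnn /dz expn0 expnS in H.
  have A1 : (1 <= 2 ^ e)%N by rewrite expn_gt0.
  move: (2 ^ e)%N A1 H => A A1 H.
  have H1 : dz 0 m%:Z ((j%:Z - 1) * (2 * A)%N%:Z).
    by apply: H; rewrite /dz; lia.
  have H2 : dz 0 m%:Z ((j%:Z - 1) * (2 * A)%N%:Z + 1).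
    by apply: H; rewrite /dz; lia.
  move: H1 H2; rewrite /dz expn0; lia.
have k1h : (k - 1 <= h + 1)%N by lia.
have hh : (h + 1 <= h + 1)%N by [].
rewrite /jstar (asb (_ : _ <-> false)); last first.
  by split=> // /(subZ _ _ k1h hh) /NS.
by rewrite (asb (_ : _ <-> false)) //; split=> // /(subZ _ _ k1h hh) /NS.
Qed.


Lemma sub0 (e : nat) (j m : int) :
  (forall n : int, dz 0 j n -> dz e m n) <-> dz e m (j - 1).
Proof.
split; first by apply; rewrite /dz expn0; lia.
move=> H n; rewrite {1}/dz expn0 => Hn.
by have -> : n = j - 1 by lia.
Qed.

Lemma jstar_high (h i k j : nat) : (h + 2 <= k)%N -> (1 <= i)%N ->
  @jstar R h i k j =
  if dz (k - h - 2) (4 * i%:Z - 2) (j%:Z - 1) then (j + 2 ^ (k - h - 2))%N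
  else if dz (k - h - 2) (4 * i%:Z - 1) (j%:Z - 1) then (j - 2 ^ (k - h - 2))%N
  else j.
Proof.
move=> hk i1.
have k1h : (h + 1 <= k - 1)%N by lia.
have kk : (k - 1 <= k - 1)%N by [].
have E1 : (k - 1 - (k - 1) = 0)%N by rewrite subnn.
have E2 : (k - 1 - (h + 1) = k - h - 2)%N by lia.
rewrite /jstar (asb (_ : _ <-> dz (k - h - 2) (4 * i%:Z - 2) (j%:Z - 1))); last first.
  rewrite (subZ _ _ kk k1h) E1 E2 -sub0.
  have -> : ((4 * i - 2)%N%:Z) = 4 * i%:Z - 2 by lia.
  by [].
rewrite (asb (_ : _ <-> dz (k - h - 2) (4 * i%:Z - 1) (j%:Z - 1))) //.
rewrite (subZ _ _ kk k1h) E1 E2 -sub0.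
have -> : ((4 * i - 1)%N%:Z) = 4 * i%:Z - 1 by lia.
by [].
Qed.


Lemma caseA (h i k j : nat) (t : R) : (1 <= h)%N -> (1 <= i)%N -> (1 <= j)%N ->
  (h + 2 <= k)%N -> haar k j (phi h i t) = haar k (@jstar R h i k j) t.
Proof.
move=> h1 i1 j1 hk.
have kN : (k <= k)%N by [].
have hN : (h + 1 <= k)%N by lia.
have Ea : (2 ^ (k - h - 1) = 2 * 2 ^ (k - h - 2))%N.
  by rewrite -expnS; congr (_ ^ _)%N; lia.
have a1 : (1 <= 2 ^ (k - h - 2))%N by rewrite expn_gt0.
have jp : (1 <= @jstar R h i k j)%N.
  rewrite jstar_high // /dz; move: (2 ^ (k - h - 2))%N a1 => a a1.
  have ia : (a <= i * a)%N by rewrite leq_pmull.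
  by case: ifP => C1; last case: ifP => C2; lia.
rewrite (haarZ _ kN j1) (haarZ _ kN jp) (phiZ _ hN i1); congr (_ * _%:~R).
move: (Num.floor _) => n.
rewrite jstar_high // /hz /phz /dz subnn expn0 Ea.
move: (2 ^ (k - h - 2))%N a1 => a a1.
have ia : (a <= i * a)%N by rewrite leq_pmull.
repeat case: ifP; lia.
Qed.

Lemma caseLow (h i k j : nat) (t : R) : (1 <= h)%N -> (1 <= i)%N -> (1 <= k)%N ->
  (1 <= j)%N -> (k <= h + 1)%N -> ~ (k = h /\ j = i) ->
  ~ (k = h + 1 /\ j = 2 * i - 1)%N -> ~ (k = h + 1 /\ j = 2 * i)%N ->
  haar k j (phi h i t) = haar k (@jstar R h i k j) t.
Proof.
move=> h1 i1 k1 j1 kh F1 F2 F3.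
have hN : (h + 1 <= h + 1)%N by [].
rewrite jstar_low // (haarZ _ kh j1) (haarZ _ kh j1) (phiZ _ hN i1).
congr (_ * _%:~R); move: (Num.floor _) => n.
have E0 : (h + 1 - h - 1 = 0)%N by lia.
rewrite /hz /phz /dz E0 expn0.
case: (ltngtP k h) => kh'.
- have Eb : (2 ^ (h + 1 - k) = 4 * 2 ^ (h - 1 - k))%N.
    by rewrite -[4%N]/(2 ^ 2)%N -expnD; congr (_ ^ _)%N; lia.
  rewrite Eb; move: (2 ^ (h - 1 - k))%N => b.
  repeat case: ifP; lia.
- have Eb : (h + 1 - k = 0)%N by lia.
  rewrite Eb expn0.
  have Ek : k = (h + 1)%N by lia.
  have G2 : j <> (2 * i - 1)%N by move=> E; apply: F2.
  have G3 : j <> (2 * i)%N by move=> E; apply: F3.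
  repeat case: ifP; lia.
- have Eb : (h + 1 - k = 1)%N by lia.
  rewrite Eb expn1.
  have G : j <> i by move=> E; apply: F1.
  repeat case: ifP; lia.
Qed.

End Real.


Section R2.
Variable R : realType.
Lemma forkE (h i : nat) (t : R) : (1 <= h)%N -> (1 <= i)%N ->
  haar h i (phi h i t) =
  (Num.sqrt 2)^-1 * (haar (h + 1) (2 * i - 1) t + haar (h + 1) (2 * i) t).
Proof.
move=> h1 i1.
have hN : (h + 1 <= h + 1)%N by [].
have hN' : (h <= h + 1)%N by lia.
have m1 : (1 <= 2 * i - 1)%N by lia.
have m2 : (1 <= 2 * i)%N by lia.
rewrite (haarZ _ hN' i1) (haarZ _ hN m1) (haarZ _ hN m2) (phiZ _ hN i1).
move: (Num.floor _) => n.
have -> : hz (h + 1 - h) i (phz (h + 1) h i n) =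
   hz (h + 1 - (h + 1)) (2 * i - 1)%N n + hz (h + 1 - (h + 1)) (2 * i)%N n.
  have E0 : (h + 1 - h - 1 = 0)%N by lia.
  have E1 : (h + 1 - h = 1)%N by lia.
  rewrite /hz /phz /dz E0 E1 subnn expn0 expn1.
  repeat case: ifP; lia.
have -> : (h + 1 - 1 = (h - 1).+1)%N by lia.
rewrite exprS sqrtrM ?ler0n // rmorphD /= -mulrDr -mulrA mulKf //.
Qed.

Lemma haar_phi (h i k j : nat) (t : R) : (1 <= h)%N -> (1 <= i)%N -> (1 <= k)%N ->
  (1 <= j)%N -> (k, j) \notin fork h i ->
  haar k j (phi h i t) = haar k (@jstar R h i k j) t.
Proof.
move=> h1 i1 k1 j1; rewrite /fork !inE !xpair_eqE negb_or negb_or => /and3P [F1 F2 F3].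
case: (leqP (h + 2) k) => hk; first exact: caseA.
by apply: caseLow => //; lia.
Qed.

Lemma jstar_inv (h i k j : nat) : (1 <= i)%N -> (1 <= k)%N ->
  @jstar R h i k (@jstar R h i k j) = j.
Proof.
move=> i1 k1.
case: (leqP (h + 2) k) => hk; last by rewrite !jstar_low //; lia.
rewrite !jstar_high // /dz; move: (2 ^ (k - h - 2))%N => a.
have ia : (a <= i * a)%N by rewrite leq_pmull.
repeat case: ifP; lia.
Qed.
End R2.

Unset Implicit Arguments.

Theorem lemma3p7 (R : realType) (X : completeNormedModType R)
    (F : seq (nat * nat)) (h i : nat) (x : nat * nat -> X) :
  uniq F -> (forall p, p \in F -> inD p) ->
  (h, i) \in F -> admissible F h i ->
  exists y : nat * nat -> X,
    (forall t : R, 0 <= t < 1 ->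
       \sum_(p <- F) haar p.1 p.2 (phi h i t) *: x p =
       \sum_(p <- Phi R h i F) haar p.1 p.2 t *: y p) /\
    \sum_(p <- F) `|x p| ^+ 2 = \sum_(p <- Phi R h i F) `|y p| ^+ 2.
Proof.
move=> uF DF hiF [ad1 ad2].
have [/= h1 [/= i1 _]] := DF _ hiF.
pose g := fun p : nat * nat => (p.1, @jstar R h i p.1 p.2).
pose G := [seq p <- F | p \notin fork h i].
pose q1 := (h + 1, 2 * i - 1)%N.
pose q2 := (h + 1, 2 * i)%N.
have GF : forall p, p \in G -> p \in F /\ p \notin fork h i.
  by move=> p; rewrite mem_filter => /andP [].
have ggG : forall p, p \in G -> g (g p) = p.
  move=> [k j] /GF [/DF [/= k1 _] _].
  by rewrite /g /= jstar_inv.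
have gq : forall p, p \in G -> (g p != q1) && (g p != q2).
  move=> [k j] /GF [pF _]; have [/= k1 _] := DF _ pF.
  case: (leqP (h + 2) k) => hk.
    by rewrite /g /q1 /q2 /= !xpair_eqE; lia.
  rewrite /g /= jstar_low //; last by lia.
  apply/andP; split; apply/eqP => E.
    by move: ad1; rewrite -/q1 -E pF.
  by move: ad2; rewrite -/q2 -E pF.
have PhiE : Phi R h i F = q1 :: q2 :: map g G.
  have -> : Phi R h i F = undup (q1 :: q2 :: map g G) by [].
  apply: undup_id => /=.
  apply/and3P; split.
  - rewrite inE negb_or; apply/andP; split.
      by rewrite /q1 /q2 xpair_eqE negb_and; apply/orP; right; apply/eqP; lia.
    by apply/mapP => -[p pG E]; move: (gq p pG); rewrite -E eqxx.
  - by apply/mapP => -[p pG E]; move: (gq p pG); rewrite -E eqxx andbF.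
  - rewrite map_inj_in_uniq ?filter_uniq // => p1 p2 p1G p2G E.
    by rewrite -(ggG _ p1G) -(ggG _ p2G) E.
have SF : forall (V : zmodType) (f : nat * nat -> V),
    \sum_(p <- F) f p = f (h, i) + \sum_(p <- G) f p.
  move=> V f; rewrite (bigD1_seq _ hiF uF) /G big_filter; congr (_ + _).
  rewrite big_seq_cond [RHS]big_seq_cond; apply: eq_bigl => p.
  case: (boolP (p \in F)) => //= pF.
  have n1 : (p == q1) = false by apply/negP => /eqP E; move: ad1; rewrite -/q1 -E pF.
  have n2 : (p == q2) = false by apply/negP => /eqP E; move: ad2; rewrite -/q2 -E pF.
  by rewrite /fork !inE -/q1 -/q2 n1 n2 !orbF.
pose s := Num.sqrt (2 : R).
pose v := s^-1 *: x (h, i).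
exists (fun q => if q == q1 then v else if q == q2 then v else x (g q)).
have q21 : (q2 == q1) = false.
  by apply/negP => /eqP; rewrite /q1 /q2 => -[]; lia.
have yG : forall p, p \in G ->
  (if g p == q1 then v else if g p == q2 then v else x (g (g p))) = x p.
  move=> p pG; have /andP [/negPf -> /negPf ->] := gq p pG.
  by rewrite ggG.
split.
- move=> t _.
  rewrite PhiE !big_cons big_map eqxx q21 eqxx SF /=.
  rewrite (forkE _ h1 i1) addrA; congr (_ + _).
    by rewrite /v !scalerA -scalerDl mulrC mulrDl.
  apply: eq_big_seq => p pG; rewrite yG //.
  have [pF pf] := GF p pG; have [k1 [j1 _]] := DF _ pF.
  by case: p pG pF pf k1 j1 => k j /= pG pF pf k1 j1; rewrite haar_phi.
- rewrite PhiE !big_cons big_map eqxx q21 eqxx SF /= addrA; congr (_ + _).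
    rewrite /v normrZ exprMn normfV ger0_norm ?sqrtr_ge0 // exprVn sqr_sqrtr ?ler0n //.
    have h2 : (2^-1 + 2^-1 : R) = 1 by rewrite [in RHS](splitr 1) mul1r.
    by rewrite -mulrDl h2 mul1r.
  by apply: eq_big_seq => p pG; rewrite yG.
Qed.
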